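(* Consider the Utility Maximization problem in the MPOI world with ground set $J$, downward-closed constraints $\mathcal{F}$ with convex relaxation $P_{\mathcal{F}}$, additive objective $f(I,x)=\sum_{i\in I}x_i$, and DAG Markov systems $S_i=(V_i,P_i,s_i,T_i,\pi_i,r_i)$, $i\in J$, with non-negative values. Then the optimal utility of an adaptive strategy (without any commitment constraint) is at most the optimal value of the linear program $$\max\ \sum_{i\in J}\Big(\sum_{u\in T_i}r_i^u z_i^u-\sum_{u\in V_i\setminus T_i}\pi_i^u z_i^u\Big)$$ subject to: $y_i^{s_i}=1$ for all $i\in J$; $y_i^u=\sum_{v\in V_i}(P_i)_{vu}\,z_i^v$ for all $i\in J$, $u\in V_i\setminus\{s_i\}$; $x_i=\sum_{u\in T_i}z_i^u$ for all $i\in J$; $z_i^u\le y_i^u$ for all $i\in J$, $u\in V_i$; $x\in P_{\mathcal{F}}$; and $x_i,y_i^u,z_i^u\ge0$ for all $i\in J$, $u\in V_i$.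
   Context: A Markov system $S=(V,P,s,T,\pi,r)$ consists of a Markov chain on a finite state space $V$ with transition matrix $P$ ($P_{uv}$ is the probability of moving from $u$ to $v$), a starting state $s$, a set $T\subseteq V$ of absorbing destination states, prices $\pi^u\ge0$ for $u\in V\setminus T$, and values $r^t\ge0$ for $t\in T$; every state reaches some destination state. It is a DAG Markov system if the directed graph with an arc $u\to v$ whenever $u\notin T$ and $P_{uv}>0$ is acyclic. Utility Maximization in the MPOI world: each $S_i$ starts at $s_i$; at each step the player either advances some $S_i$ from its current non-destination state $u$, paying $\pi_i^u$ (the state then moves randomly according to $P_i$), or ends the game by selecting a set $I\in\mathcal{F}$ of ready elements (elements whose Markov system is in a destination state). The utility of an adaptive strategy is $\mathbb{E}[\sum_{i\in I}r_i^{\mathrm{dest}(i)}-\text{total price paid}]$. $P_{\mathcal{F}}\subseteq[0,1]^J$ is a convex set containing the indicator vectors of all sets in $\mathcal{F}$. (Intended meaning of variables: $y_i^u$ = probability state $u$ of $S_i$ is reached, $z_i^u$ = probability $S_i$ is played from $u$, or selected when $u\in T_i$.) *)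

(* Defs.v *)
From HB Require Import structures.
From mathcomp Require Import all_boot all_order all_algebra.
Set Implicit Arguments. Unset Strict Implicit. Unset Printing Implicit Defensive.
Import Order.TTheory GRing.Theory Num.Theory.
Local Open Scope ring_scope.

(* P u v = probability of moving from u to v; dest = T; price u = pi^u
   (relevant for u \notin T); value t = r^t (relevant for t \in T). *)
Record MarkovSys (R : realFieldType) (V : finType) := MkMS {
  P : V -> V -> R;
  start : V;
  dest : {set V};
  price : V -> R;
  value : V -> R
}.

Definition ms_arc (R : realFieldType) (V : finType) (S : MarkovSys R V) : rel V :=
  fun u v => (u \notin dest S) && (0 < P S u v).

Definition markov_system (R : realFieldType) (V : finType) (S : MarkovSys R V) : Prop :=
  [/\ (forall u v, 0 <= P S u v),
      (forall u, \sum_(v : V) P S u v = 1),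
      (forall t, t \in dest S -> P S t t = 1) &
      (forall u, exists2 t, t \in dest S & connect (ms_arc S) u t)].

Definition dag_markov_system (R : realFieldType) (V : finType) (S : MarkovSys R V) : Prop :=
  markov_system S /\ (forall u v, ms_arc S u v -> ~~ connect (ms_arc S) v u).

Definition nonneg_ms (R : realFieldType) (V : finType) (S : MarkovSys R V) : Prop :=
  (forall u, u \notin dest S -> 0 <= price S u) /\
  (forall t, t \in dest S -> 0 <= value S t).

Section World.
Variables (R : realFieldType) (J : finType) (V : J -> finType).
Variable (M : forall i : J, MarkovSys R (V i)).
Variable (F : {set {set J}}).

Definition jstate := forall i : J, V i.

Definition jstart : jstate := fun i => start (M i).

Inductive action := Advance of J | Select of {set J}.

(* An adaptive (deterministic, history-dependent) strategy: maps the
   history of observed configurations (after the initial one) to an action. *)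
Definition strategy := seq jstate -> action.

Definition cur (h : seq jstate) : jstate := last jstart h.

Definition legal (st : jstate) (a : action) : bool :=
  match a with
  | Advance i => st i \notin dest (M i)
  | Select A => (A \in F) && [forall i in A, st i \in dest (M i)]
  end.

Definition valid_strategy (sigma : strategy) : Prop :=
  forall h, legal (cur h) (sigma h).

Fixpoint util_from (sigma : strategy) (n : nat) (h : seq jstate) : R :=
  match n with
  | 0 => 0
  | n'.+1 =>
    let st := cur h in
    match sigma h with
    | Select A => \sum_(i in A) value (M i) (st i)
    | Advance i =>
        - price (M i) (st i)
        + \sum_(v : V i) P (M i) (st i) v * util_from sigma n' (rcons h (dfwith st v))
    end
  end.

(* Every valid strategy on DAG Markov systems ends after fewer than
   \sum_i #|V i| decisions, so this horizon computes its full expected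
   utility. *)
Definition horizon : nat := (\sum_(i : J) #|V i|)%N.

Definition utility (sigma : strategy) : R := util_from sigma horizon [::].

Variable (PF : (J -> R) -> Prop).

Definition lp_feasible (x : J -> R) (y z : forall i : J, V i -> R) : Prop :=
  [/\ (forall i, y i (start (M i)) = 1),
      (forall i (u : V i), u != start (M i) ->
          y i u = \sum_(v : V i) P (M i) v u * z i v),
      (forall i, x i = \sum_(u in dest (M i)) z i u),
      (forall i (u : V i), z i u <= y i u) &
      [/\ PF x, (forall i, 0 <= x i), (forall i (u : V i), 0 <= y i u)
        & (forall i (u : V i), 0 <= z i u)]].

Definition lp_objective (z : forall i : J, V i -> R) : R :=
  \sum_(i : J) (\sum_(u in dest (M i)) value (M i) u * z i u
                - \sum_(u in ~: dest (M i)) price (M i) u * z i u).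

End World.

Definition downward_closed (J : finType) (F : {set {set J}}) : Prop :=
  set0 \in F /\ (forall A B : {set J}, A \in F -> B \subset A -> B \in F).

Definition convex_relaxation (R : realFieldType) (J : finType)
    (F : {set {set J}}) (PF : (J -> R) -> Prop) : Prop :=
  [/\ (forall x, PF x -> forall i, 0 <= x i <= 1),
      (forall a b (t : R), PF a -> PF b -> 0 <= t <= 1 ->
          PF (fun i => t * a i + (1 - t) * b i)) &
      (forall A, A \in F -> PF (fun i => if i \in A then 1 else 0))].

(* Main.v *)
Require Import Defs.
From mathcomp Require Import all_boot all_order all_algebra.
From mathcomp Require Import ring lra.
From Stdlib Require Import FunctionalExtensionality.
Unset Printing Implicit Defensive.
Import Order.TTheory GRing.Theory Num.Theory.
Local Open Scope ring_scope.

Section Proofs.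
Variables (R : realFieldType) (J : finType) (V : J -> finType).
Variable (M : forall i : J, MarkovSys R (V i)).
Variable (F : {set {set J}}).
Variable (sigma : strategy V).

Definition nxt (h : seq (jstate V)) j (v : V j) := rcons h (dfwith (cur M h) v).
Arguments nxt h [j] v.

Fixpoint occ (n : nat) (h : seq (jstate V)) : forall i, V i -> R :=
  match n with
  | 0 => fun _ _ => 0
  | n'.+1 =>
    match sigma h with
    | Select _ => fun _ _ => 0
    | Advance j => fun i u => (Tagged V (cur M h j) == Tagged V u)%:R
        + \sum_(v : V j) P (M j) (cur M h j) v * occ n' (nxt h v) i u
    end
  end.

Fixpoint sel (n : nat) (h : seq (jstate V)) : forall i, V i -> R :=
  match n with
  | 0 => fun _ _ => 0
  | n'.+1 =>
    match sigma h with
    | Select A => fun i u => ((i \in A) && (cur M h i == u))%:R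
    | Advance j => fun i u =>
        \sum_(v : V j) P (M j) (cur M h j) v * sel n' (nxt h v) i u
    end
  end.

Lemma cur_nxt h j (v : V j) i : cur M (nxt h v) i = dfwith (cur M h) v i.
Proof. by rewrite /cur /nxt last_rcons. Qed.

Lemma tag_same i (x u : V i) : (Tagged V x == Tagged V u) = (x == u).
Proof. by rewrite eq_Tagged. Qed.

Lemma tag_diff j i (x : V j) (u : V i) : j != i -> (Tagged V x == Tagged V u) = false.
Proof.
move=> ne; apply/negbTE/negP => /eqP /(congr1 (@tag _ _)) /= e.
by rewrite e eqxx in ne.
Qed.

Lemma sum_swap (A B : finType) (a : A -> R) (p : B -> R) (b : B -> A -> R) :
  \sum_u a u * (\sum_v p v * b v u) = \sum_v p v * (\sum_u a u * b v u).
Proof.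
under eq_bigr do rewrite mulr_sumr.
rewrite exchange_big; apply: eq_bigr => v _; rewrite mulr_sumr.
by apply: eq_bigr => u _; rewrite mulrCA.
Qed.

Hypothesis HP : forall i u v, 0 <= P (M i) u v.
Hypothesis Hsum : forall i u, \sum_v P (M i) u v = 1.
Hypothesis Hval : valid_strategy M F sigma.

Lemma occ_ge0 n h i u : 0 <= occ n h i u.
Proof.
elim: n h => [|n IH] h //=; case: (sigma h) => [j|A] //.
apply: addr_ge0; first by rewrite ler0n.
by apply: sumr_ge0 => v _; apply: mulr_ge0.
Qed.

Lemma sel_ge0 n h i u : 0 <= sel n h i u.
Proof.
elim: n h => [|n IH] h //=; case: (sigma h) => [j|A] //.
by apply: sumr_ge0 => v _; apply: mulr_ge0.
Qed.


Lemma ind_sum (f : forall i, V i -> R) j (x : V j) :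
  \sum_i \sum_(u : V i) f i u * (Tagged V x == Tagged V u)%:R = f j x.
Proof.
rewrite (bigD1 j) //= [X in _ + X]big1 ?addr0.
  rewrite (bigD1 x) //= tag_same eqxx mulr1 big1 ?addr0 // => u ux.
  by rewrite tag_same eq_sym (negbTE ux) mulr0.
move=> i ij; apply: big1 => u _; rewrite tag_diff ?mulr0 //.
by rewrite eq_sym.
Qed.

Lemma util_eq n h : util_from M sigma n h =
  \sum_i (\sum_u value (M i) u * sel n h i u - \sum_u price (M i) u * occ n h i u).
Proof.
elim: n h => [|n IH] h /=.
  by rewrite big1 // => i _; rewrite !big1 ?subrr // => u _; rewrite mulr0.
case: (sigma h) => [j|A].
  under eq_bigr do rewrite IH.
  have E : forall i, \sum_u value (M i) u *
      (\sum_(v : V j) P (M j) (cur M h j) v * sel n (nxt h v) i u) -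
    \sum_u price (M i) u * ((Tagged V (cur M h j) == Tagged V u)%:R +
      \sum_(v : V j) P (M j) (cur M h j) v * occ n (nxt h v) i u) =
    \sum_(v : V j) P (M j) (cur M h j) v * (\sum_u value (M i) u * sel n (nxt h v) i u
      - \sum_u price (M i) u * occ n (nxt h v) i u)
    - \sum_u price (M i) u * (Tagged V (cur M h j) == Tagged V u)%:R.
    move=> i.
    under [X in _ - X = _]eq_bigr do rewrite mulrDr.
    rewrite big_split /= (@sum_swap _ _ (value (M i))) (@sum_swap _ _ (price (M i))).
    under [X in _ = X - _]eq_bigr do rewrite mulrBr.
    by rewrite sumrB opprD addrA addrAC.
  under [RHS]eq_bigr do rewrite E.
  rewrite sumrB ind_sum addrC; congr (_ - _).
  rewrite exchange_big; apply: eq_bigr => v _; rewrite mulr_sumr //.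
rewrite big_mkcond; apply: eq_bigr => i _.
rewrite [X in _ - X]big1 ?subr0; last by move=> u _; rewrite mulr0.
case: (i \in A) => /=.
  rewrite (bigD1 (cur M h i)) //= eqxx mulr1 big1 ?addr0 // => u ne.
  by rewrite eq_sym (negbTE ne) mulr0.
by rewrite big1 // => u _; rewrite mulr0.
Qed.


Lemma sel_nondest n h i u : u \notin dest (M i) -> sel n h i u = 0.
Proof.
move=> Hu; elim: n h => [|n IH] h //=.
have := Hval h; case: (sigma h) => [j|A] /= Hl.
  by rewrite big1 // => v _; rewrite IH mulr0.
case/andP: Hl => _ /forall_inP Hd.
case iA: (i \in A) => //=.
case: eqP => // e.
by rewrite -e Hd in Hu.
Qed.

Lemma occ_dest n h i u : u \in dest (M i) -> occ n h i u = 0.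
Proof.
move=> Hu; elim: n h => [|n IH] h //=.
have := Hval h; case: (sigma h) => [j|A] /= Hl //.
rewrite big1 ?addr0; last by move=> v _; rewrite IH mulr0.
case: (eqVneq j i) => [e|ne]; last by rewrite tag_diff.
subst j; rewrite tag_same.
case: eqP => // e.
by rewrite e Hu in Hl.
Qed.

Lemma occ_flow n h i u :
  occ n h i u <= (cur M h i == u)%:R + \sum_v P (M i) v u * occ n h i v.
Proof.
elim: n h => [|n IH] h /=.
  by rewrite big1 ?addr0 ?ler0n // => v _; rewrite mulr0.
case: (sigma h) => [j|A]; last first.
  by rewrite big1 ?addr0 ?ler0n // => v _; rewrite mulr0.
set s := cur M h j.
have step : \sum_(w : V j) P (M j) s w * occ n (nxt h w) i u <=
    \sum_(w : V j) P (M j) s w * ((cur M (nxt h w) i == u)%:R +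
       \sum_v P (M i) v u * occ n (nxt h w) i v).
  by apply: ler_sum => w _; apply: ler_wpM2l.
apply: (le_trans (lerD (lexx _) step)).
under eq_bigr do rewrite mulrDr.
rewrite big_split /=.
under [X in _ + X <= _]eq_bigr do rewrite mulrDr.
rewrite [X in _ + X <= _]big_split /= (@sum_swap _ _ (P (M i) ^~ u)).
rewrite !addrA lerD2r.
case: (eqVneq j i) => [e|ne].
  subst j; rewrite tag_same.
  under eq_bigr do rewrite cur_nxt dfwith_in.
  rewrite lerD2l (bigD1 u) //= eqxx mulr1 big1 ?addr0.
    rewrite (bigD1 s) //= tag_same eqxx mulr1 big1 ?addr0 //.
    by move=> v nv; rewrite tag_same eq_sym (negbTE nv) mulr0.
  by move=> v nv; rewrite (negbTE nv) mulr0.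
rewrite tag_diff // add0r [X in _ <= _ + X]big1 ?addr0; last first.
  by move=> v _; rewrite tag_diff // mulr0.
under eq_bigr do rewrite cur_nxt dfwith_out //.
by rewrite -mulr_suml Hsum mul1r.
Qed.

Hypothesis Hdag : forall i u v, ms_arc (M i) u v -> ~~ connect (ms_arc (M i)) v u.

Lemma occ_le n h i u : occ n h i u <= (connect (ms_arc (M i)) (cur M h i) u)%:R.
Proof.
elim: n h => [|n IH] h /=; first by rewrite ler0n.
have := Hval h; case: (sigma h) => [j|A] /= Hl; last by rewrite ler0n.
case: (eqVneq j i) => [e|ne]; last first.
  rewrite tag_diff // add0r.
  apply: le_trans (_ : \sum_(w : V j) P (M j) (cur M h j) w *
       (connect (ms_arc (M i)) (cur M h i) u)%:R <= _).
    apply: ler_sum => w _; apply: ler_wpM2l => //.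
    by have := IH (nxt h w); rewrite cur_nxt dfwith_out.
  by rewrite -mulr_suml Hsum mul1r.
subst j; set s := cur M h i; rewrite tag_same.
have key : forall w : V i, P (M i) s w * occ n (nxt h w) i u <=
    P (M i) s w * (connect (ms_arc (M i)) s u && (s != u))%:R.
  move=> w; have := HP i s w; rewrite le0r => /orP [/eqP ->|Pp].
    by rewrite !mul0r.
  apply: ler_wpM2l => //.
  apply: le_trans (IH (nxt h w)) _; rewrite cur_nxt dfwith_in ler_nat.
  case cw: (connect (ms_arc (M i)) w u) => //=.
  have arc : ms_arc (M i) s w by rewrite /ms_arc Hl Pp.
  have nsu : s != u.
    by apply/negP => /eqP e; have := Hdag _ _ _ arc; rewrite e cw.
  by rewrite (connect_trans (connect1 arc) cw) nsu.
apply: le_trans (lerD (lexx _) (ler_sum _ (fun w _ => key w))) _.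
rewrite -mulr_suml Hsum mul1r.
case: (eqVneq s u) => [<-|nsu]; first by rewrite connect0 /= addr0.
by rewrite add0r andbT.
Qed.

Lemma sel_le1 n h i u : sel n h i u <= 1.
Proof.
elim: n h => [|n IH] h /=; first by rewrite ler01.
case: (sigma h) => [j|A]; last by rewrite lern1 leq_b1.
apply: le_trans (_ : \sum_(w : V j) P (M j) (cur M h j) w * 1 <= _).
  by apply: ler_sum => w _; apply: ler_wpM2l.
by rewrite -mulr_suml Hsum mul1r.
Qed.


Variable PF : (J -> R) -> Prop.
Hypothesis Hconv : forall a b (t : R), PF a -> PF b -> 0 <= t <= 1 ->
          PF (fun i => t * a i + (1 - t) * b i).

Lemma zero_w (W : eqType) (p : W -> R) (f : W -> J -> R) (s : seq W) :
  (forall w, 0 <= p w) -> \sum_(w <- s) p w = 0 ->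
  forall i, \sum_(w <- s) p w * f w i = 0.
Proof.
move=> Hp; elim: s => [|w s IH]; first by move=> _ i; rewrite big_nil.
rewrite !big_cons => /eqP; rewrite paddr_eq0 //; last exact: sumr_ge0.
by case/andP=> /eqP Hw /eqP Hs i; rewrite big_cons Hw IH // mul0r add0r.
Qed.

Lemma conv_seq (W : eqType) (p : W -> R) (f : W -> J -> R) (s : seq W) :
  (forall w, 0 <= p w) -> (forall w, PF (f w)) -> 0 < \sum_(w <- s) p w ->
  PF (fun i => (\sum_(w <- s) p w * f w i) / \sum_(w <- s) p w).
Proof.
move=> Hp Hf; elim: s => [|w s IH]; first by rewrite big_nil ltxx.
rewrite big_cons => Hpos.
have Hc : 0 <= \sum_(w <- s) p w by apply: sumr_ge0.
case: (eqVneq (\sum_(w <- s) p w) 0) => Hc0.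
  have Hz := @zero_w W p f s Hp Hc0.
  rewrite Hc0 addr0 in Hpos.
  have -> : (fun i => (\sum_(w0 <- w :: s) p w0 * f w0 i) / (p w + \sum_(w0 <- s) p w0))
     = f w.
    apply: functional_extensionality => i.
    rewrite big_cons Hz Hc0 !addr0 mulrC mulrA mulVf ?mul1r //.
    by rewrite gt_eqF.
  exact: Hf.
have cpos : 0 < \sum_(w <- s) p w by rewrite lt0r Hc0.
set c := \sum_(w <- s) p w in Hc Hc0 cpos IH Hpos *.
have Hac : p w + c != 0 by rewrite gt_eqF.
have -> : (fun i => (\sum_(w0 <- w :: s) p w0 * f w0 i) / (p w + c)) =
   (fun i => (p w / (p w + c)) * f w i + (1 - p w / (p w + c)) *
      ((\sum_(w0 <- s) p w0 * f w0 i) / c)).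
  apply: functional_extensionality => i.
  rewrite big_cons; field.
  by rewrite Hc0 Hac.
apply: Hconv; [exact: Hf | exact: IH | apply/andP; split].
  by apply: divr_ge0 => //; apply: addr_ge0.
by rewrite ler_pdivrMr // mul1r lerDl.
Qed.

Lemma conv_fin (W : finType) (p : W -> R) (f : W -> J -> R) :
  (forall w, 0 <= p w) -> \sum_w p w = 1 -> (forall w, PF (f w)) ->
  PF (fun i => \sum_w p w * f w i).
Proof.
move=> Hp H1 Hf.
have := @conv_seq W p f (index_enum W) Hp Hf.
rewrite H1 ltr01 => /(_ isT).
have -> : (fun i => (\sum_(w <- index_enum W) p w * f w i) / 1) =
          (fun i => \sum_w p w * f w i).
  by apply: functional_extensionality => i; rewrite divr1.
by [].
Qed.


Hypothesis Hset0 : set0 \in F.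
Hypothesis Hind : forall A, A \in F -> PF (fun i => if i \in A then 1 else 0).
Hypothesis Hdestabs : forall i t, t \in dest (M i) -> P (M i) t t = 1.

Lemma sel_PF n h : PF (fun i => \sum_(u in dest (M i)) sel n h i u).
Proof.
elim: n h => [|n IH] h.
  have -> : (fun i => \sum_(u in dest (M i)) sel 0 h i u) =
            (fun i => if i \in (set0 : {set J}) then 1 else 0).
    by apply: functional_extensionality => i; rewrite in_set0 big1.
  exact: Hind.
have Hl := Hval h; simpl; case: (sigma h) Hl => [j|A] /= Hl.
  set s := cur M h j.
  have -> : (fun i => \sum_(u in dest (M i))
        \sum_(v : V j) P (M j) s v * sel n (nxt h v) i u) =
      (fun i => \sum_(v : V j) P (M j) s v *
        (fun v i => \sum_(u in dest (M i)) sel n (nxt h v) i u) v i).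
    apply: functional_extensionality => i; rewrite exchange_big.
    by apply: eq_bigr => v _; rewrite mulr_sumr.
  apply: conv_fin; [by move=> w; apply: HP | by apply: Hsum | by move=> v; apply: IH].
case/andP: Hl => HA /forall_inP Hd.
have -> : (fun i => \sum_(u in dest (M i)) ((i \in A) && (cur M h i == u))%:R : R) =
          (fun i => if i \in A then 1 else 0).
  apply: functional_extensionality => i.
  case iA: (i \in A) => /=; last by rewrite big1.
  rewrite (bigD1 (cur M h i)) ?Hd //= eqxx big1 ?addr0 // => u /andP [_ nu].
  by rewrite eq_sym (negbTE nu).
exact: Hind.
Qed.

Lemma main_ineq OPT :
  (forall (x : J -> R) (y z : forall i : J, V i -> R),
        lp_feasible M PF x y z -> lp_objective M z <= OPT) ->
  utility M sigma <= OPT.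
Proof.
move=> Hopt.
set n := horizon V.
pose z := fun i (u : V i) => if u \in dest (M i) then sel n [::] i u else occ n [::] i u.
pose y := fun i (u : V i) => if u == start (M i) then 1 else \sum_v P (M i) v u * z i v.
pose x := fun i => \sum_(u in dest (M i)) sel n [::] i u.
have Hz0 : forall i u, 0 <= z i u.
  by move=> i u; rewrite /z; case: ifP => _; [apply: sel_ge0 | apply: occ_ge0].
have feas : lp_feasible M PF x y z.
  split.
  - by move=> i; rewrite /y eqxx.
  - by move=> i u nu; rewrite /y (negbTE nu).
  - by move=> i; rewrite /x; apply: eq_bigr => u ud; rewrite /z ud.
  - move=> i u; rewrite /y; case: (eqVneq u (start (M i))) => [->|nu].
      rewrite /z; case: ifP => _; first exact: sel_le1.
      by apply: le_trans (occ_le _ _ _ _) _; rewrite lern1 leq_b1.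
    rewrite /=; case ud: (u \in dest (M i)).
      rewrite (bigD1 u) //= Hdestabs // mul1r lerDl.
      by apply: sumr_ge0 => v _; apply: mulr_ge0.
    rewrite {1}/z ud.
    apply: le_trans (occ_flow _ _ _ _) _.
    have -> : (cur M [::] i == u) = false.
      by apply/negbTE; rewrite eq_sym; exact: nu.
    rewrite add0r; apply: ler_sum => v _; rewrite /z; case vd: (v \in dest (M i)) => //.
    by rewrite occ_dest // mulr0; apply: mulr_ge0 => //; apply: sel_ge0.
  - split.
    + exact: sel_PF.
    + by move=> i; apply: sumr_ge0 => u _; apply: sel_ge0.
    + move=> i u; rewrite /y; case: ifP => _; first exact: ler01.
      by apply: sumr_ge0 => v _; apply: mulr_ge0.
    + exact: Hz0.
apply: le_trans (Hopt _ _ _ feas).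
rewrite /utility -/n util_eq /lp_objective le_eqVlt; apply/orP; left; apply/eqP.
apply: eq_bigr => i _; congr (_ - _).
  rewrite [RHS]big_mkcond; apply: eq_bigr => u _; rewrite /z; case ud: (u \in dest (M i)) => //.
  by rewrite sel_nondest ?ud // mulr0.
rewrite [RHS]big_mkcond; apply: eq_bigr => u _; rewrite in_setC /z.
by case ud: (u \in dest (M i)) => //=; rewrite occ_dest // mulr0.
Qed.

End Proofs.

Theorem lemma5 (R : realFieldType) (J : finType) (V : J -> finType)
    (M : forall i : J, MarkovSys R (V i))
    (F : {set {set J}}) (PF : (J -> R) -> Prop) :
  downward_closed F ->
  convex_relaxation F PF ->
  (forall i, dag_markov_system (M i)) ->
  (forall i, nonneg_ms (M i)) ->
  forall OPT : R,
    (forall (x : J -> R) (y z : forall i : J, V i -> R),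
        lp_feasible M PF x y z -> lp_objective M z <= OPT) ->
  forall sigma : strategy V,
    valid_strategy M F sigma ->
    utility M sigma <= OPT.
Proof.
move=> [H0 _] [_ Hconv Hind] Hdag _ OPT Hopt sigma Hval.
apply: (@main_ineq _ _ _ _ _ _ _ _ Hval _ _ Hconv H0 Hind _ _ Hopt).
- by move=> i u v; case: (Hdag i) => [[]].
- by move=> i u; case: (Hdag i) => [[]].
- by move=> i u v; case: (Hdag i) => _; apply.
- by move=> i t; case: (Hdag i) => [[]] _ _ H _ _; apply: H.
Qed.
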